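(* Let $E$ be an Archimedean vector lattice and suppose $(J_n)_{n\in\mathbb N}$ are uniformly closed ideals of $E$ such that the quotient vector lattice $E/J_n$ has the countable sup property for each $n$. If $\bigcap_{n=1}^\infty J_n=\{0\}$, then $E$ has the countable sup property.
   Context: An ideal $J$ of $E$ is uniformly closed if it is closed under relatively uniform limits (limits $x_k\to x$ for which there is $u\ge0$ and $\varepsilon_k\to0$ with $|x_k-x|\le\varepsilon_k u$). A vector lattice has the countable sup property if every nonempty subset possessing a supremum contains a countable subset with the same supremum. *)

(* Defs.v *)
From HB Require Import structures.
From mathcomp Require Import all_boot all_order all_algebra.
From mathcomp Require Import boolp classical_sets cardinality reals topology normedtype sequences.
Set Implicit Arguments. Unset Strict Implicit. Unset Printing Implicit Defensive.
Import Order.TTheory GRing.Theory Num.Theory numFieldNormedType.Exports.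
Local Open Scope classical_set_scope.
Local Open Scope ring_scope.

Section VL.
Variables (R : realType) (V : lmodType R).

Definition is_lub (r : V -> V -> Prop) (S : set V) (s : V) : Prop :=
  (forall x, S x -> r x s) /\ (forall t, (forall x, S x -> r x t) -> r s t).

Definition is_glb (r : V -> V -> Prop) (S : set V) (s : V) : Prop :=
  (forall x, S x -> r s x) /\ (forall t, (forall x, S x -> r t x) -> r t s).

Definition vector_lattice (le : V -> V -> Prop) : Prop :=
  (forall x, le x x) /\
  (forall x y, le x y -> le y x -> x = y) /\
  (forall x y z, le x y -> le y z -> le x z) /\
  (forall x y z, le x y -> le (x + z) (y + z)) /\
  (forall (a : R) x, 0 <= a -> le 0 x -> le 0 (a *: x)) /\
  (forall x y, exists s, is_lub le [set x; y] s) /\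
  (forall x y, exists s, is_glb le [set x; y] s).

Definition is_abs (le : V -> V -> Prop) (x a : V) : Prop :=
  is_lub le [set x; - x] a.

Definition archimedean (le : V -> V -> Prop) : Prop :=
  forall x y, le 0 x -> (forall n : nat, le (n%:R *: x) y) -> x = 0.

Definition ideal (le : V -> V -> Prop) (J : set V) : Prop :=
  [/\ J 0,
      (forall x y, J x -> J y -> J (x + y)),
      (forall (a : R) x, J x -> J (a *: x))
    & (forall x y a b, J x -> is_abs le y a -> is_abs le x b -> le a b -> J y)].

Definition ru_converges (le : V -> V -> Prop) (xk : nat -> V) (x : V) : Prop :=
  exists u : V, le 0 u /\
    exists eps : nat -> R, eps @ \oo --> (0 : R) /\
      forall k a, is_abs le (xk k - x) a -> le a (eps k *: u).

Definition uniformly_closed (le : V -> V -> Prop) (J : set V) : Prop :=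
  forall (xk : nat -> V) (x : V),
    (forall k, J (xk k)) -> ru_converges le xk x -> J x.

Definition countable_sup_property (r : V -> V -> Prop) : Prop :=
  forall (S : set V) (s : V), S !=set0 -> is_lub r S s ->
    exists C : set V, [/\ C `<=` S, countable C & is_lub r C s].

(* The order of the quotient vector lattice E/J, expressed on representatives:
   [x] <= [y] in E/J iff x <= y + z for some z in J. *)
Definition quot_le (le : V -> V -> Prop) (J : set V) (x y : V) : Prop :=
  exists z, J z /\ le x (y + z).

End VL.

(* Main.v *)
Require Import Defs.
From HB Require Import structures.
From mathcomp Require Import all_boot all_order all_algebra.
From mathcomp Require Import boolp classical_sets cardinality reals topology normedtype sequences.
Import Order.TTheory GRing.Theory Num.Theory numFieldNormedType.Exports.
Local Open Scope classical_set_scope.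
Local Open Scope ring_scope.

Lemma vl_trans {R : realType} {E : lmodType R} {le : E -> E -> Prop} :
  vector_lattice le -> forall x y z, le x y -> le y z -> le x z.
Proof. by case=> _ [_ [T _]]. Qed.

Lemma vl_refl {R : realType} {E : lmodType R} {le : E -> E -> Prop} :
  vector_lattice le -> forall x, le x x.
Proof. by case. Qed.

Lemma vl_add {R : realType} {E : lmodType R} {le : E -> E -> Prop} :
  vector_lattice le -> forall x y z, le x y -> le (x + z) (y + z).
Proof. by case=> _ [_ [_ [A _]]]. Qed.

Lemma vl_add2 {R : realType} {E : lmodType R} {le : E -> E -> Prop} :
  vector_lattice le -> forall x y x' y', le x y -> le x' y' -> le (x + x') (y + y').
Proof.
move=> vl x y x' y' h h'; apply: (vl_trans vl _ _ _ (vl_add vl _ _ x' h)).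
by rewrite [y + x']addrC [y + y']addrC; apply: vl_add.
Qed.

Lemma vl_sub0 {R : realType} {E : lmodType R} {le : E -> E -> Prop} :
  vector_lattice le -> forall x y, le x y <-> le 0 (y - x).
Proof.
move=> vl x y; split=> h.
  by have := vl_add vl _ _ (- x) h; rewrite subrr.
by have := vl_add vl _ _ x h; rewrite add0r subrK.
Qed.

Lemma toS {R : realType} {E : lmodType R} {le : E -> E -> Prop}
  (vl : vector_lattice le) {x y} : le x y -> le 0 (y - x).
Proof. exact: (vl_sub0 vl x y).1. Qed.

Lemma ofS {R : realType} {E : lmodType R} {le : E -> E -> Prop}
  (vl : vector_lattice le) {x y} : le 0 (y - x) -> le x y.
Proof. exact: (vl_sub0 vl x y).2. Qed.

Lemma vl_scale {R : realType} {E : lmodType R} {le : E -> E -> Prop} :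
  vector_lattice le -> forall (a : R) x y, 0 <= a -> le x y -> le (a *: x) (a *: y).
Proof.
move=> vl a x y a0 /(vl_sub0 vl) h; apply/(vl_sub0 vl).
rewrite -scalerBr; case: vl => _ [_ [_ [_ [S _]]]]; exact: S.
Qed.

Definition vpos {R : realType} {E : lmodType R} {le : E -> E -> Prop}
  (vl : vector_lattice le) (x : E) : E :=
  projT1 (cid (proj1 (proj2 (proj2 (proj2 (proj2 (proj2 vl))))) x 0)).

Lemma vpos_spec {R : realType} {E : lmodType R} {le : E -> E -> Prop}
  (vl : vector_lattice le) x : is_lub le [set x; 0] (vpos vl x).
Proof. rewrite /vpos; case: cid => //. Qed.

Lemma vpos_ge {R : realType} {E : lmodType R} {le : E -> E -> Prop}
  (vl : vector_lattice le) x : le x (vpos vl x) /\ le 0 (vpos vl x).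
Proof. by case: (vpos_spec vl x) => h _; split; apply: h; [left|right]. Qed.

Lemma vpos_least {R : realType} {E : lmodType R} {le : E -> E -> Prop}
  (vl : vector_lattice le) x t : le x t -> le 0 t -> le (vpos vl x) t.
Proof. by move=> h1 h2; case: (vpos_spec vl x) => _; apply => y [->|->]. Qed.

Lemma vabs_le {R : realType} {E : lmodType R} {le : E -> E -> Prop} v a e :
  is_abs le v a -> le v e -> le (- v) e -> le a e.
Proof. by move=> [_ h] h1 h2; apply: h => y [->|->]. Qed.

Lemma vabs_pos {R : realType} {E : lmodType R} {le : E -> E -> Prop}
  (vl : vector_lattice le) p : le 0 p -> is_abs le p p.
Proof.
move=> p0; split.
  move=> y [->|->]; first exact: vl_refl.
  apply: (vl_trans vl _ (0 : E)) => //; apply/(vl_sub0 vl). rewrite opprK add0r //.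
by move=> t; apply; left.
Qed.

Lemma vabs_ge {R : realType} {E : lmodType R} {le : E -> E -> Prop}
  (vl : vector_lattice le) z b : is_abs le z b -> le z b /\ le 0 b.
Proof.
case=> ub _; have h1 : le z b by apply: ub; left.
have h2 : le (- z) b by apply: ub; right.
split => //.
have := vl_add2 vl _ _ _ _ h1 h2; rewrite subrr => h.
have := vl_scale vl (2^-1) _ _ _ h; rewrite scaler0.
have -> : b + b = (2 : R) *: b by rewrite scaler_nat mulr2n.
rewrite scalerA mulVf ?scale1r; last by rewrite pnatr_eq0.
by apply; rewrite invr_ge0 ler0n.
Qed.

Lemma vabs_ex {R : realType} {E : lmodType R} {le : E -> E -> Prop}
  (vl : vector_lattice le) z : exists b, is_abs le z b.
Proof. by case: vl => _ [_ [_ [_ [_ [L _]]]]]; apply: L. Qed.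

Lemma vpos_mono {R : realType} {E : lmodType R} {le : E -> E -> Prop}
  (vl : vector_lattice le) x y : le x y -> le (vpos vl x) (vpos vl y).
Proof.
move=> h; case: (vpos_ge vl y) => h1 h2; apply: vpos_least => //.
exact: vl_trans vl _ _ _ h h1.
Qed.

Lemma K1 {R : realType} {E : lmodType R} {le : E -> E -> Prop}
  (vl : vector_lattice le) J x : ideal le J ->
  quot_le le J x 0 <-> J (vpos vl x).
Proof.
case=> J0 JD JZ JS; split.
  case=> z [Jz xz]; rewrite add0r in xz.
  have [b bz] := vabs_ex vl z.
  have [zb b0] := vabs_ge vl _ _ bz.
  have p0 := (vpos_ge vl x).2.
  apply: (JS z _ _ b Jz (vabs_pos vl _ p0) bz).
  apply: vpos_least => //; exact: vl_trans vl _ _ _ xz zb.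
move=> Jp; exists (vpos vl x); split => //; rewrite add0r; exact: (vpos_ge vl x).1.
Qed.

Lemma L1 {R : realType} {E : lmodType R} {le : E -> E -> Prop}
  (vl : vector_lattice le) z e a : le 0 e ->
  is_abs le (vpos vl (z - e) - vpos vl z) a -> le a e.
Proof.
move=> e0 ha; apply: (vabs_le _ _ _ ha).
  apply: (vl_trans vl _ (0 : E)) => //; apply: (ofS vl).
  rewrite sub0r opprB; apply: (toS vl); apply: (vpos_mono vl).
  by apply: (ofS vl); rewrite opprB addrC subrK.
rewrite opprB; apply: (ofS vl); rewrite opprB addrA; apply: (toS vl).
apply: vpos_least.
  by have h := vl_add vl _ _ e (vpos_ge vl (z - e)).1; rewrite subrK addrC in h.
by rewrite -(addr0 (0 : E)); apply: (vl_add2 vl) => //; exact: (vpos_ge vl _).2.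
Qed.

Lemma q_le {R : realType} {E : lmodType R} {le : E -> E -> Prop}
  (vl : vector_lattice le) J x y : ideal le J -> le x y -> quot_le le J x y.
Proof. by case=> J0 _ _ _ h; exists 0; rewrite addr0. Qed.

Lemma q_add {R : realType} {E : lmodType R} {le : E -> E -> Prop}
  (vl : vector_lattice le) J x y w : quot_le le J x y -> quot_le le J (x + w) (y + w).
Proof.
case=> j [Jj h]; exists j; split => //; rewrite addrAC; exact: vl_add.
Qed.

Lemma q_eq {R : realType} {E : lmodType R} {le : E -> E -> Prop}
  J x y x' y' : x = x' -> y = y' -> quot_le le J x y -> quot_le le J x' y'.
Proof. by move=> -> ->. Qed.

Lemma vscale_ge0 {R : realType} {E : lmodType R} {le : E -> E -> Prop}
  (vl : vector_lattice le) (c : R) x : 0 <= c -> le 0 x -> le 0 (c *: x).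
Proof. by case: vl => _ [_ [_ [_ [S _]]]]; apply: S. Qed.

Lemma AQ {R : realType} {E : lmodType R} {le : E -> E -> Prop}
  (vl : vector_lattice le) J z d0 : ideal le J -> uniformly_closed le J ->
  le 0 d0 -> (forall k : nat, quot_le le J (k%:R *: z) d0) ->
  quot_le le J z 0.
Proof.
move=> idJ ucJ d00 hk; apply/(K1 vl _ _ idJ).
have Jk k : J (vpos vl (z - k.+1%:R^-1 *: d0)).
  apply/(K1 vl _ _ idJ).
  have [j [Jj h]] := hk k.+1.
  have c0 : 0 <= k.+1%:R^-1 :> R by rewrite invr_ge0 ler0n.
  have h2 := vl_scale vl _ _ _ c0 h.
  rewrite scalerA mulVf ?pnatr_eq0 // scale1r scalerDr in h2.
  exists (k.+1%:R^-1 *: j); split; first by case: idJ => _ _ JZ _; apply: JZ.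
  rewrite add0r.
  have h3 := vl_add vl _ _ (- (k.+1%:R^-1 *: d0)) h2.
  by rewrite addrAC subrr add0r in h3.
apply: (ucJ _ _ Jk); exists d0; split => //.
exists (fun k : nat => k.+1%:R^-1); split.
  exact: cvg_harmonic.
move=> k a ha; apply: (L1 vl _ _ _ _ ha).
by apply: (vscale_ge0 vl); rewrite // invr_ge0 ler0n.
Qed.

Lemma q_le_trans {R : realType} {E : lmodType R} {le : E -> E -> Prop}
  (vl : vector_lattice le) J x y z : quot_le le J x y -> le y z -> quot_le le J x z.
Proof.
case=> j [Jj h] h2; exists j; split => //; apply: (vl_trans vl _ _ _ h).
exact: vl_add.
Qed.

Theorem proposition4p15 (R : realType) (E : lmodType R) (le : E -> E -> Prop)
    (J : nat -> set E) :
  vector_lattice le -> archimedean le ->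
  (forall n, ideal le (J n)) ->
  (forall n, uniformly_closed le (J n)) ->
  (forall n, countable_sup_property (quot_le le (J n))) ->
  \bigcap_n J n = [set 0] ->
  countable_sup_property le.
Proof.
move=> vl arch idJ ucJ cspJ capJ S s [x0 Sx0] [ubS lubS].
pose L n := [set y | forall x, S x -> quot_le le (J n) y (s - x)].
pose Sn n := [set c | exists x y, [/\ S x, L n y & c = y + (x - s)]].
have L0 n : L n 0.
  by move=> x Sx; apply: q_le => //; apply: (toS vl); apply: ubS.
have lubn n : is_lub (quot_le le (J n)) (Sn n) 0.
  split.
    move=> c [x [y [Sx Ly ->]]].
    apply: (q_eq _ _ _ _ _ (erefl _) _ (q_add vl _ _ _ (x - s) (Ly x Sx))).
    by rewrite -[x - s]opprB subrr.
  move=> t ht.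
  have Lstep y : L n y -> L n (y - t).
    move=> Ly x Sx.
    have hc : Sn n (y + (x - s)) by exists x, y.
    have := q_add vl _ _ _ ((s - x) - t) (ht _ hc); apply: q_eq.
      by rewrite -[s - x]opprB -addrA addNKr.
    by rewrite addrC subrK.
  have Lk k : L n (- (k%:R *: t)).
    elim: k => [|k IH]; first by rewrite scale0r oppr0.
    rewrite -[k.+1]addn1 natrD scalerDl scale1r opprD; exact: Lstep.
  have := AQ vl (J n) (-t) (s - x0) (idJ n) (ucJ n) (toS vl (ubS _ Sx0))
    (fun k => eq_ind _ (fun u => quot_le le (J n) u (s - x0)) (Lk k x0 Sx0) _ (esym (scalerN _ _))).
  move/(q_add vl _ _ _ t); apply: q_eq; by rewrite ?addNr ?add0r.
have hC n := cspJ n (Sn n) 0 (ex_intro _ (0 + (x0 - s)) (ex_intro _ x0 (ex_intro _ 0 (And3 Sx0 (L0 n) erefl)))) (lubn n).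
have [Cn hCn] := choice hC.
have hf (p : nat * E) : exists x, Sn p.1 p.2 -> S x /\ exists y, L p.1 y /\ p.2 = y + (x - s).
  case: (pselect (Sn p.1 p.2)) => [[x [y [Sx Ly e]]]|nS]; first by exists x => _; split => //; exists y.
  by exists s.
have [f hf'] := choice hf.
exists (\bigcup_n (fun c => f (n, c)) @` Cn n); split.
- move=> x [n _ [c Cc <-]].
  have [CS _ _] := hCn n.
  exact: (hf' (n, c) (CS _ Cc)).1.
- apply: bigcup_countable; first exact: countableP.
  move=> n _; apply: card_le_trans (card_image_le _ _) _.
  by have [_ ? _] := hCn n.
split; first by move=> x [n _ [c Cc <-]]; have [CS _ _] := hCn n; apply: ubS; exact: (hf' (n, c) (CS _ Cc)).1.
move=> t ht; apply: lubS => x1 Sx1.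
have qn n : quot_le le (J n) x1 t.
  have [CS _ [_ lubC]] := hCn n.
  have h0 : quot_le le (J n) 0 (t - x1).
    apply: lubC => c Cc.
    have [Sx [y [Ly ec]]] := hf' (n, c) (CS _ Cc).
    have xt : le (f (n, c)) t by apply: ht; exists n => //; exists c.
    rewrite /= in ec; rewrite ec.
    apply: (q_le_trans vl _ _ _ _ (q_add vl _ _ _ (f (n, c) - s) (Ly x1 Sx1))).
    rewrite [s - x1 + _]addrC addrA subrK; exact: vl_add vl _ _ _ xt.
  by have := q_add vl _ _ _ x1 h0; rewrite add0r subrK.
have Jp n : J n (vpos vl (x1 - t)).
  apply/(K1 vl _ _ (idJ n)).
  by have := q_add vl _ _ _ (- t) (qn n); rewrite subrr.
have : (\bigcap_n J n) (vpos vl (x1 - t)) by move=> n _; exact: Jp.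
rewrite capJ /= => p0.
have := (vpos_ge vl (x1 - t)).1; rewrite p0 => h.
by have := vl_add vl _ _ t h; rewrite subrK add0r.
Qed.
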